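(* Consider the continuous-variable Deutsch–Jozsa algorithm defined below, with measurement window $\delta=\pi/(2P)$. For every $n$, every $P>0$ and every function $f:\{0,1\}^n\to\{0,1\}$ promised to be constant or balanced, an error probability of $O(e^{-m})$ in deciding whether $f$ is constant or balanced can be achieved by making $O(m)$ independent repetitions of the algorithm (each repetition with a fresh preparation of the initial state and the same oracle $f$), with the hidden constants independent of $N=2^n$ and of $f$.
   Context: Deutsch–Jozsa problem: given $f:\{0,1\}^n\to\{0,1\}$ promised to be either constant (same value on all inputs) or balanced (value $0$ on exactly half of the inputs), decide which. Let $N=2^n$ and let $z=z_1z_2\cdots z_N\in\{0,1\}^N$ be the list of values of $f$ on the inputs in lexicographic order. Continuous-variable (CV) Deutsch–Jozsa algorithm with parameter $P>0$: prepare the position wave function $\phi_0(x)=\frac{\sin(Px)}{\sqrt{\pi P}\,x}$; apply the Fourier transform $\tilde\phi(p)=\frac{1}{\sqrt{2\pi}}\int_{-\infty}^{\infty}e^{\imath p x}\phi(x)\,dx$, giving the momentum wave function equal to $1/\sqrt{2P}$ on $[-P,P]$ and $0$ elsewhere; the oracle multiplies this by $f_z(p)=\sum_{j=1}^{N}(-1)^{z_j}\,\mathbf{1}_{I_j}(p)$, where $[-P,P]$ is partitioned into $N$ consecutive equal intervals $I_1,\dots,I_N$ of width $2P/N$ ordered from $p=+P$ down to $p=-P$ (so $I_j$ is centred at $\frac{N-(2j-1)}{N}P$); then apply the inverse Fourier transform, yielding $$\phi_z(x)=\frac{\sin(Px/N)}{\sqrt{P\pi}\,x}\sum_{j=1}^{N}(-1)^{z_j}\exp\!\Big(\imath\,\tfrac{N-(2j-1)}{N}Px\Big).$$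 Finally measure position and output $1$ (''detection'') if the outcome lies in $[-\delta,\delta]$ and $0$ otherwise; thus one run outputs $1$ with probability $\int_{-\delta}^{\delta}|\phi_z(x)|^2\,dx$. Error probability means the probability that the final decision (made from the outcomes of the repetitions) is wrong. *)

(* Defs.v *)
From Stdlib Require Import Reals Lra Lia List.
From Coquelicot Require Import Coquelicot.
Import ListNotations.
Open Scope R_scope.

Fixpoint rsum (f : nat -> R) (n : nat) : R :=
  match n with
  | O => 0
  | S k => rsum f k + f k
  end.

Fixpoint ncount (b : nat -> bool) (n : nat) : nat :=
  match n with
  | O => O
  | S k => (ncount b k + (if b k then 1 else 0))%nat
  end.

(* The truth table z_1 ... z_N is encoded by z : nat -> bool with
   z j = z_{j+1} for 0 <= j < N (true = value 1). *)
Definition sgn (b : bool) : R := if b then -1 else 1.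

(* Frequency of interval I_{j+1}: (N - (2(j+1)-1))/N * P. *)
Definition freq (N : nat) (P : R) (j : nat) : R :=
  (INR N - (2 * INR j + 1)) / INR N * P.

(* |phi_z(x)|^2, with |sum_j s_j exp(i theta_j x)|^2 written as Re^2 + Im^2. *)
Definition phi_sq (N : nat) (P : R) (z : nat -> bool) (x : R) : R :=
  (sin (P * x / INR N)) ^ 2 / (P * PI * x ^ 2) *
  ((rsum (fun j => sgn (z j) * cos (freq N P j * x)) N) ^ 2 +
   (rsum (fun j => sgn (z j) * sin (freq N P j * x)) N) ^ 2).

Definition delta (P : R) : R := PI / (2 * P).

Definition detect_prob (n : nat) (P : R) (z : nat -> bool) : R :=
  RInt (phi_sq (2 ^ n) P z) (- delta P) (delta P).

Definition is_constant (n : nat) (z : nat -> bool) : Prop :=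
  forall j, (j < 2 ^ n)%nat -> z j = z O.

Definition is_balanced (n : nat) (z : nat -> bool) : Prop :=
  (2 * ncount (fun j => negb (z j)) (2 ^ n) = 2 ^ n)%nat.

Fixpoint all_outcomes (k : nat) : list (list bool) :=
  match k with
  | O => cons nil nil
  | S k' => flat_map (fun l => cons (cons true l) (cons (cons false l) nil)) (all_outcomes k')
  end.

Definition seq_prob (p : R) (w : list bool) : R :=
  List.fold_right (fun (b : bool) (acc : R) => (if b then p else 1 - p) * acc) 1 w.

(* Error probability of decision rule D (D w = true means "constant")
   after k independent runs, when the truth is [truth]. *)
Definition error_prob (p : R) (k : nat) (D : list bool -> bool) (truth : bool) : R :=
  List.fold_right (fun (w : list bool) (acc : R) =>
     seq_prob p w * (if Bool.eqb (D w) truth then 0 else 1) + acc) 0 (all_outcomes k).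

(* Main.v *)
Require Import Defs.
From Stdlib Require Import Reals Lra Lia List ZArith.
From Coquelicot Require Import Coquelicot.
Open Scope R_scope.

Fixpoint cnt (w : list bool) : nat :=
  match w with nil => O | b :: l => ((if b then 1 else 0) + cnt l)%nat end.

Definition SS (f : list bool -> R) (k : nat) : R :=
  fold_right (fun w acc => f w + acc) 0 (all_outcomes k).

Lemma fold_flat (f : list bool -> R) (L : list (list bool)) :
  fold_right (fun w acc => f w + acc) 0
    (flat_map (fun l => cons (cons true l) (cons (cons false l) nil)) L)
  = fold_right (fun l acc => (f (true :: l) + f (false :: l)) + acc) 0 L.
Proof. induction L as [|l L IH]; simpl; [reflexivity|]. rewrite IH. ring. Qed.

Lemma SS_S f k : SS f (S k) = SS (fun l => f (true :: l) + f (false :: l)) k.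
Proof. unfold SS. simpl. apply fold_flat. Qed.

Lemma fold_le (f g : list bool -> R) L : (forall w, f w <= g w) ->
  fold_right (fun w acc => f w + acc) 0 L <= fold_right (fun w acc => g w + acc) 0 L.
Proof. intros H; induction L; simpl; [lra|]. specialize (H a). lra. Qed.

Lemma SS_le f g k : (forall w, f w <= g w) -> SS f k <= SS g k.
Proof. intros; apply fold_le; auto. Qed.

Lemma fold_ext (f g : list bool -> R) L : (forall w, f w = g w) ->
  fold_right (fun w acc => f w + acc) 0 L = fold_right (fun w acc => g w + acc) 0 L.
Proof. intros H; induction L; simpl; [lra|]. rewrite H, IHL. reflexivity. Qed.

Lemma fold_scal (f : list bool -> R) c L :
  fold_right (fun w acc => c * f w + acc) 0 L = c * fold_right (fun w acc => f w + acc) 0 L.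
Proof. induction L; simpl; [ring|]. rewrite IHL. ring. Qed.

Lemma SS_gf p x k :
  SS (fun w => seq_prob p w * x ^ cnt w) k = (p * x + (1 - p)) ^ k.
Proof.
  induction k as [|k IH].
  - unfold SS; simpl. ring.
  - rewrite SS_S. unfold SS in *.
    rewrite (fold_ext _ (fun w => (p * x + (1 - p)) * (seq_prob p w * x ^ cnt w))).
    + rewrite fold_scal, IH. simpl. ring.
    + intros w. simpl. ring.
Qed.

Lemma seq_prob_nonneg p w : 0 <= p <= 1 -> 0 <= seq_prob p w.
Proof. intros H; induction w as [|b w IH]; simpl; [lra|].
  destruct b; apply Rmult_le_pos; lra. Qed.

Lemma pow_anti y m n : 0 <= y <= 1 -> (m <= n)%nat -> y ^ n <= y ^ m.
Proof. intros Hy Hmn. replace n with (m + (n - m))%nat by lia.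
  rewrite pow_add. pose proof (pow_le y m (proj1 Hy)).
  assert (y ^ (n - m) <= 1) by (rewrite <- (pow1 (n - m)); apply pow_incr; lra).
  assert (0 <= y ^ (n - m)) by (apply pow_le; lra). nra. Qed.

Definition Dth (T : nat) (w : list bool) : bool := Nat.leb T (cnt w).

Lemma err_const p r k T : 0 <= p <= 1 -> 1 <= r ->
  error_prob p k (Dth T) true <= r ^ T * (p / r + (1 - p)) ^ k.
Proof.
  intros Hp Hr. unfold error_prob.
  change (SS (fun w => seq_prob p w * (if Bool.eqb (Dth T w) true then 0 else 1)) k
     <= r ^ T * (p / r + (1 - p)) ^ k).
  replace (p / r) with (p * / r) by reflexivity.
  rewrite <- SS_gf. unfold SS. rewrite <- fold_scal. apply fold_le. intros w.
  pose proof (seq_prob_nonneg p w Hp).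
  assert (Hi : 0 < / r <= 1). { split. apply Rinv_0_lt_compat; lra.
     rewrite <- Rinv_1. apply Rinv_le_contravar; lra. }
  unfold Dth. destruct (Nat.leb T (cnt w)) eqn:E; simpl.
  - assert (0 <= r ^ T) by (apply pow_le; lra).
    assert (0 <= (/ r) ^ cnt w) by (apply pow_le; lra). rewrite Rmult_0_r; apply Rmult_le_pos; [|apply Rmult_le_pos]; lra.
  - apply Nat.leb_gt in E.
    assert (H1 : (/ r) ^ T <= (/ r) ^ cnt w) by (apply pow_anti; [lra| lia]).
    assert (H2 : r ^ T * (/ r) ^ T = 1).
    { rewrite <- Rpow_mult_distr, Rinv_r by lra. apply pow1. }
    assert (0 <= r ^ T) by (apply pow_le; lra).
    assert (H3 : 1 <= r ^ T * (/ r) ^ cnt w) by (rewrite <- H2; apply Rmult_le_compat_l; auto).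
    replace (r ^ T * (seq_prob p w * (/ r) ^ cnt w)) with (seq_prob p w * (r ^ T * (/ r) ^ cnt w)) by ring.
    apply Rmult_le_compat_l; auto.
Qed.

Lemma err_bal p r k T : 0 <= p <= 1 -> 1 <= r ->
  error_prob p k (Dth T) false <= (/ r) ^ T * (p * r + (1 - p)) ^ k.
Proof.
  intros Hp Hr. unfold error_prob.
  change (SS (fun w => seq_prob p w * (if Bool.eqb (Dth T w) false then 0 else 1)) k
     <= (/ r) ^ T * (p * r + (1 - p)) ^ k).
  rewrite <- SS_gf. unfold SS. rewrite <- fold_scal. apply fold_le. intros w.
  pose proof (seq_prob_nonneg p w Hp).
  assert (Hi : 0 < / r <= 1). { split. apply Rinv_0_lt_compat; lra.
     rewrite <- Rinv_1. apply Rinv_le_contravar; lra. }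
  unfold Dth. destruct (Nat.leb T (cnt w)) eqn:E; simpl.
  - apply Nat.leb_le in E.
    assert (H1 : r ^ T <= r ^ cnt w) by (apply Rle_pow; [lra| lia]).
    assert (H2 : (/ r) ^ T * r ^ T = 1).
    { rewrite <- Rpow_mult_distr, Rinv_l by lra. apply pow1. }
    assert (0 <= (/ r) ^ T) by (apply pow_le; lra).
    assert (H3 : 1 <= (/ r) ^ T * r ^ cnt w) by (rewrite <- H2; apply Rmult_le_compat_l; auto).
    replace ((/ r) ^ T * (seq_prob p w * r ^ cnt w)) with (seq_prob p w * ((/ r) ^ T * r ^ cnt w)) by ring.
    apply Rmult_le_compat_l; auto.
  - assert (0 <= r ^ cnt w) by (apply pow_le; lra).
    assert (0 <= (/ r) ^ T) by (apply pow_le; lra).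
    rewrite Rmult_0_r; apply Rmult_le_pos; [|apply Rmult_le_pos]; lra.
Qed.
Lemma frac_pow (p q : Z) (n : nat) : (0 < q)%Z -> (IZR p / IZR q)^n = IZR (p ^ Z.of_nat n) / IZR (q ^ Z.of_nat n).
Proof. intros. rewrite <- !pow_IZR. unfold Rdiv. rewrite Rpow_mult_distr, pow_inv. reflexivity. Qed.
Lemma frac_ineq (a b c d : Z) : (0 < b)%Z -> (0 < d)%Z -> (3 * (a * c) <= b * d)%Z ->
  IZR a / IZR b * (IZR c / IZR d) <= 1/3.
Proof. intros Hb Hd Hz. apply IZR_lt in Hb; apply IZR_lt in Hd; apply IZR_le in Hz.
 rewrite !mult_IZR in Hz.
 replace (IZR a / IZR b * (IZR c / IZR d)) with ((IZR a * IZR c) / (IZR b * IZR d)) by (field; lra).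
 apply Rmult_le_reg_r with (IZR b * IZR d). nra.
 unfold Rdiv. rewrite Rmult_assoc, Rinv_l by nra. lra. Qed.
Lemma numA : (3/2)^28 * (59/75)^52 <= 1/3.
Proof. rewrite (frac_pow 3 2) by lia. rewrite (frac_pow 59 75) by lia.
 apply frac_ineq; vm_compute; congruence. Qed.
Lemma numB : (2/3)^28 * (243/200)^52 <= 1/3.
Proof. rewrite (frac_pow 2 3) by lia. rewrite (frac_pow 243 200) by lia.
 apply frac_ineq; vm_compute; congruence. Qed.

Lemma exp_m (m : nat) : (1/3) ^ m <= exp (- INR m).
Proof. induction m as [|m IH].
 - simpl. rewrite Ropp_0, exp_0. lra.
 - rewrite S_INR. replace (- (INR m + 1)) with (- INR m + - 1) by ring.
   rewrite exp_plus. simpl.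
   assert (/3 <= exp (-1)). { assert (E: exp (-1) = / exp 1) by (rewrite <- exp_Ropp; f_equal; lra).
     rewrite E. apply Rinv_le_contravar.
     apply exp_pos. apply exp_le_3. }
   assert (0 <= (1/3)^m) by (apply pow_le; lra).
   replace (1/3 * (1/3)^m) with ((1/3)^m * /3) by field.
   apply Rmult_le_compat; lra. Qed.

Lemma prob_final p m :
 (16/25 <= p <= 1 -> error_prob p (52*m) (Dth (28*m)) true <= exp (- INR m)) /\
 (0 <= p <= 43/100 -> error_prob p (52*m) (Dth (28*m)) false <= exp (- INR m)).
Proof. split; intros Hp.
 - eapply Rle_trans. apply err_const with (r := 3/2); lra.
   rewrite !pow_mult, <- Rpow_mult_distr.
   eapply Rle_trans; [|apply exp_m]. apply pow_incr. split.
   + apply Rmult_le_pos; apply pow_le; lra.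
   + eapply Rle_trans; [|apply numA]. apply Rmult_le_compat_l. apply pow_le; lra.
     apply pow_incr. split; [|]; lra.
 - eapply Rle_trans. apply err_bal with (r := 3/2); lra.
   rewrite !pow_mult, <- Rpow_mult_distr.
   eapply Rle_trans; [|apply exp_m]. apply pow_incr.
   replace (/ (3/2)) with (2/3) by field. split.
   + apply Rmult_le_pos; apply pow_le; lra.
   + eapply Rle_trans; [|apply numB]. apply Rmult_le_compat_l. apply pow_le; lra.
     apply pow_incr. split; [|]; lra.
Qed.

Lemma sin_lo (a : R) : 0 <= a -> a <= PI -> a - a^3/6 <= sin a /\ sin a <= a.
Proof. intros H1 H2. destruct (sin_bound a 0 H1 H2) as [L U].
 unfold sin_approx, sin_term in *. simpl in *.
 assert (L' : a - a^3/6 <= sin a) by (eapply Rle_trans; [|exact L]; right; field).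
 assert (U' : sin a <= a - a^3/6 + a^5/120) by (eapply Rle_trans; [exact U| right; field]).
 split; [lra|]. pose proof PI_4.
 assert (0 <= a^3) by (apply pow_le; lra). assert (a^2 <= 16) by nra.
 assert (a^5 = a^3 * a^2) by ring. nra. Qed.
Lemma cos_lo (a : R) : - PI / 2 <= a -> a <= PI / 2 -> 1 - a^2/2 <= cos a.
Proof. intros H1 H2. destruct (cos_bound a 0 H1 H2) as [L U].
 unfold cos_approx, cos_term in *. simpl in *.
 eapply Rle_trans; [|exact L]; right; field. Qed.
Lemma PI_ub : PI <= 16/5.
Proof. destruct (Rle_dec PI (16/5)) as [h|h]; auto. exfalso.
 assert (H1: - PI/2 <= 8/5) by (pose proof PI_RGT_0; lra).
 assert (H2: 8/5 <= PI/2) by lra.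
 destruct (cos_bound (8/5) 0 H1 H2) as [L U].
 assert (cos (8/5) > 0) by (apply cos_gt_0; lra).
 assert (E : cos_approx (8/5) (2 * (0 + 1)) = 1 - (8/5)^2/2 + (8/5)^4/24).
 { unfold cos_approx, cos_term; simpl; field. }
 rewrite E in U. simpl in U. lra. Qed.

Lemma abs_sin_le (b : R) : Rabs b <= PI -> Rabs (sin b) <= Rabs b.
Proof. intros H. destruct (Rle_dec 0 b) as [h|h].
 - rewrite Rabs_pos_eq in H by lra. destruct (sin_lo b h H).
   assert (0 <= sin b) by (apply sin_ge_0; lra).
   rewrite !Rabs_pos_eq; lra.
 - rewrite Rabs_left in H by lra. destruct (sin_lo (-b)) as [A B]; try lra.
   rewrite sin_neg in *. assert (0 <= - sin b) by (rewrite <- sin_neg; apply sin_ge_0; lra).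
   rewrite Rabs_left1 by lra. rewrite Rabs_left by lra. lra. Qed.

Lemma cos_1 (b : R) : Rabs b <= PI / 2 -> Rabs (cos b - 1) <= b^2/2.
Proof. intros H. assert (- PI/2 <= b <= PI/2) by (apply Rabs_le_between in H; lra).
 pose proof (cos_lo b ltac:(lra) ltac:(lra)). pose proof (COS_bound b).
 rewrite Rabs_left1 by lra. lra. Qed.

Definition sinc (y : R) : R := if Req_EM_T y 0 then 1 else sin y / y.

Lemma sinc_bounds (y : R) : Rabs y <= PI -> 1 - y^2/6 <= sinc y <= 1.
Proof. intros H. unfold sinc. destruct (Req_EM_T y 0) as [e|e].
 - subst. lra.
 - destruct (Rle_dec 0 y) as [h|h].
   + rewrite Rabs_pos_eq in H by lra. destruct (sin_lo y h H).
     assert (0 < y) by lra. split.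
     * apply Rmult_le_reg_r with y; auto. unfold Rdiv. rewrite Rmult_assoc, Rinv_l by lra. nra.
     * apply Rmult_le_reg_r with y; auto. unfold Rdiv. rewrite Rmult_assoc, Rinv_l by lra. nra.
   + rewrite Rabs_left in H by lra. destruct (sin_lo (-y)) as [A B]; try lra.
     rewrite sin_neg in *. assert (0 < - y) by lra.
     replace (sin y / y) with (- sin y / - y) by (field; lra). split.
     * apply Rmult_le_reg_r with (-y); auto. unfold Rdiv. rewrite Rmult_assoc, Rinv_l by lra. nra.
     * apply Rmult_le_reg_r with (-y); auto. unfold Rdiv. rewrite Rmult_assoc, Rinv_l by lra. nra.
Qed.

Lemma sinc_abs (y : R) : Rabs y <= PI -> Rabs (sinc y) <= 1.
Proof. intros H. pose proof (sinc_bounds y H). pose proof PI_ub.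
 assert (y^2 <= PI^2) by (rewrite <- (pow2_abs y); apply pow_incr; split; [apply Rabs_pos|lra]).
 assert (PI^2 <= 11) by (pose proof PI_RGT_0; nra). apply Rabs_le. split; lra. Qed.

Lemma sinc_cont (y : R) : continuity_pt sinc y.
Proof.
 destruct (Req_EM_T y 0) as [e|e].
 - subst. intros eps Heps. destruct (derivable_pt_lim_sin 0 eps Heps) as [d Hd].
   exists d. split; [apply cond_pos|]. intros x [[_ Hx0] Hx]. simpl in *. unfold Rdist in *.
   unfold sinc at 2. destruct (Req_EM_T 0 0); [|congruence]. unfold sinc.
   destruct (Req_EM_T x 0) as [e1|e1]. { subst; congruence. }
   rewrite Rminus_0_r in Hx. specialize (Hd x e1 Hx).
   rewrite Rplus_0_l, sin_0, cos_0, Rminus_0_r in Hd. exact Hd.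
 - apply continuity_pt_locally_ext with (f := fun x => sin x / x) (a := Rabs y).
   + apply Rabs_pos_lt; auto.
   + intros x Hx. unfold sinc. destruct (Req_EM_T x 0) as [e'|e']; [|reflexivity].
     subst. unfold Rdist in Hx. rewrite Rminus_0_l, Rabs_Ropp in Hx. lra.
   + apply continuity_pt_div; auto. apply continuity_sin. apply continuity_pt_id.
Qed.

Lemma rsum_ext_lt f g k : (forall j, (j < k)%nat -> f j = g j) -> rsum f k = rsum g k.
Proof. induction k as [|k IH]; intros H; simpl; [reflexivity|].
 rewrite IH by (intros; apply H; lia). rewrite H by lia. reflexivity. Qed.
Lemma rsum_le_lt f g k : (forall j, (j < k)%nat -> f j <= g j) -> rsum f k <= rsum g k.
Proof. induction k as [|k IH]; intros H; simpl; [lra|].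
 pose proof (IH ltac:(intros; apply H; lia)). pose proof (H k ltac:(lia)). lra. Qed.
Lemma rsum_plus f g k : rsum (fun j => f j + g j) k = rsum f k + rsum g k.
Proof. induction k; simpl; [ring|]. rewrite IHk; ring. Qed.
Lemma rsum_scal c f k : rsum (fun j => c * f j) k = c * rsum f k.
Proof. induction k; simpl; [ring|]. rewrite IHk; ring. Qed.
Lemma rsum_abs f k : Rabs (rsum f k) <= rsum (fun j => Rabs (f j)) k.
Proof. induction k; simpl. rewrite Rabs_R0; lra.
 eapply Rle_trans. apply Rabs_triang. lra. Qed.
Lemma rsum_const c k : rsum (fun _ => c) k = INR k * c.
Proof. induction k. simpl; ring. cbn [rsum]. rewrite IHk, S_INR. ring. Qed.

Lemma rsum_sq (NR : R) k :
  rsum (fun j => (NR - (2 * INR j + 1))^2) k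
  = INR k * NR^2 - 2 * NR * INR k ^2 + INR k * (4 * INR k ^2 - 1) / 3.
Proof. induction k. simpl; field. cbn [rsum]. rewrite IHk, S_INR. field. Qed.

Lemma sgn_sum z k : rsum (fun j => sgn (z j)) k = 2 * INR (ncount (fun j => negb (z j)) k) - INR k.
Proof. induction k. simpl; ring. cbn [rsum ncount]. rewrite IHk, plus_INR, S_INR.
  unfold sgn; destruct (z k); simpl; ring. Qed.

Lemma sq_sum_le (a b : nat -> R) k : (forall j, a j ^2 + b j ^2 <= 1) ->
  (rsum a k)^2 + (rsum b k)^2 <= (INR k)^2.
Proof. intros H. induction k as [|k IH]; simpl rsum. simpl; lra.
 rewrite S_INR. set (A := rsum a k) in *. set (B := rsum b k) in *.
 pose proof (H k). set (x := a k) in *. set (y := b k) in *.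
 pose proof (pos_INR k). set (K := INR k) in *.
 assert (Hk : A * x + B * y <= K).
 { destruct (Req_dec K 0) as [e|e].
   - rewrite e in IH. assert (HA : A = 0) by nra. assert (HB : B = 0) by nra. rewrite HA, HB, e. lra.
   - assert (G1 : 0 <= (K*x - A)^2 + (K*y - B)^2) by (pose proof (pow2_ge_0 (K*x-A)); pose proof (pow2_ge_0 (K*y-B)); lra).
     assert (G2 : K^2*(x^2+y^2) <= K^2 * 1) by (apply Rmult_le_compat_l; nra).
     assert (G3 : 2*K*(A*x+B*y) <= 2*K*K) by nra.
     assert (0 < K) by lra.
     apply Rmult_le_reg_l with (2*K); nra. }
 nra. Qed.

Lemma freq_abs N P j : 0 < P -> (1 <= N)%nat -> (j < N)%nat -> Rabs (freq N P j) <= P.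
Proof. intros HP HN Hj. unfold freq.
 assert (HNR : 1 <= INR N) by (apply (le_INR 1); lia).
 assert (INR j + 1 <= INR N) by (rewrite <- S_INR; apply le_INR; lia).
 pose proof (pos_INR j).
 rewrite Rabs_mult, (Rabs_pos_eq P) by lra.
 assert (Rabs ((INR N - (2 * INR j + 1)) / INR N) <= 1).
 { unfold Rdiv. rewrite Rabs_mult, Rabs_inv, (Rabs_pos_eq (INR N)) by lra.
   apply Rmult_le_reg_r with (INR N); [lra|]. rewrite Rmult_assoc, Rinv_l by lra.
   rewrite Rmult_1_r, Rmult_1_l. apply Rabs_le. lra. }
 nra. Qed.

Lemma freq_sq_sum N P : 0 < P -> (1 <= N)%nat ->
  rsum (fun j => (freq N P j)^2) N <= P^2 * INR N / 3.
Proof. intros HP HN.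
 assert (HNR : 1 <= INR N) by (apply (le_INR 1); lia).
 assert (E : rsum (fun j => (freq N P j)^2) N = (P / INR N)^2 * rsum (fun j => (INR N - (2 * INR j + 1))^2) N).
 { rewrite <- rsum_scal. apply rsum_ext_lt. intros j _. unfold freq. field. lra. }
 rewrite E, rsum_sq.
 replace ((P / INR N) ^ 2 * (INR N * INR N ^ 2 - 2 * INR N * INR N ^ 2 + INR N * (4 * INR N ^ 2 - 1) / 3))
   with (P^2 * INR N / 3 - P^2 / (3 * INR N)) by (field; lra).
 assert (0 <= P^2 / (3 * INR N)) by (apply Rmult_le_pos; [nra| apply Rlt_le, Rinv_0_lt_compat; lra]).
 lra. Qed.

Lemma cp_plus (f g : R -> R) x : continuity_pt f x -> continuity_pt g x -> continuity_pt (fun y => f y + g y) x.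
Proof. apply continuity_pt_plus. Qed.
Lemma cp_mult (f g : R -> R) x : continuity_pt f x -> continuity_pt g x -> continuity_pt (fun y => f y * g y) x.
Proof. apply continuity_pt_mult. Qed.
Lemma cp_const (c x : R) : continuity_pt (fun _ => c) x.
Proof. apply continuity_pt_const. intros a b; reflexivity. Qed.
Lemma cp_id x : continuity_pt (fun y => y) x.
Proof. apply continuity_pt_id. Qed.
Lemma cp_comp (f g : R -> R) x : continuity_pt f x -> continuity_pt g (f x) -> continuity_pt (fun y => g (f y)) x.
Proof. intros. apply (continuity_pt_comp f g x); auto. Qed.
Lemma cp_pow2 (f : R -> R) x : continuity_pt f x -> continuity_pt (fun y => f y ^ 2) x.
Proof. intros H. change (continuity_pt (fun y => f y * (f y * 1)) x).
 apply cp_mult; auto. apply cp_mult; auto. apply cp_const. Qed.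
Lemma cp_rsum (F : nat -> R -> R) k x : (forall j, continuity_pt (F j) x) ->
  continuity_pt (fun y => rsum (fun j => F j y) k) x.
Proof. intros H. induction k as [|k IH]. exact (cp_const 0 x).
 change (continuity_pt (fun y => rsum (fun j => F j y) k + F k y) x). apply cp_plus; auto. Qed.

Definition Cs N P z x := rsum (fun j => sgn (z j) * cos (freq N P j * x)) N.
Definition Ss N P z x := rsum (fun j => sgn (z j) * sin (freq N P j * x)) N.
Definition gfun N P z x :=
  (P / INR N * sinc (P / INR N * x))^2 * / (P * PI) * (Cs N P z x ^2 + Ss N P z x ^2).

Lemma gfun_cont N P z x : continuity_pt (gfun N P z) x.
Proof. unfold gfun.
 apply cp_mult. apply cp_mult. apply cp_pow2. apply cp_mult. apply cp_const.
 apply (cp_comp (fun y => P / INR N * y) sinc). apply cp_mult; [apply cp_const|apply cp_id].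
 apply sinc_cont. apply cp_const.
 apply cp_plus; apply cp_pow2; [unfold Cs|unfold Ss].
 - apply (cp_rsum (fun j y => sgn (z j) * cos (freq N P j * y))). intros j.
   apply cp_mult. apply cp_const. apply (cp_comp (fun y => freq N P j * y) cos).
   apply cp_mult; [apply cp_const|apply cp_id]. apply continuity_cos.
 - apply (cp_rsum (fun j y => sgn (z j) * sin (freq N P j * y))). intros j.
   apply cp_mult. apply cp_const. apply (cp_comp (fun y => freq N P j * y) sin).
   apply cp_mult; [apply cp_const|apply cp_id]. apply continuity_sin.
Qed.

Lemma phi_g N P z x : x <> 0 -> 0 < P -> (1 <= N)%nat -> phi_sq N P z x = gfun N P z x.
Proof. intros Hx HP HN. assert (HNR : 1 <= INR N) by (apply (le_INR 1); lia).
 unfold phi_sq, gfun, Cs, Ss, sinc.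
 destruct (Req_EM_T (P / INR N * x) 0) as [e|e].
 { exfalso. assert (P / INR N <> 0) by (apply Rgt_not_eq, Rdiv_lt_0_compat; lra).
   apply Rmult_integral in e. tauto. }
 replace (P * x / INR N) with (P / INR N * x) by (field; lra).
 pose proof PI_RGT_0. field. repeat split; lra. Qed.

Lemma ex_RInt_cp (g : R -> R) a b : (forall x, continuity_pt g x) -> ex_RInt g a b.
Proof. intros H. apply (ex_RInt_continuous (V := R_CompleteNormedModule)). intros z _. apply continuity_pt_filterlim, H. Qed.

Lemma RInt_ext0 (f g : R -> R) a b : a < 0 < b -> (forall x, continuity_pt g x) ->
  (forall x, x <> 0 -> f x = g x) -> RInt f a b = RInt g a b.
Proof. intros Hab Hg Hfg.
 assert (E1 : is_RInt f a 0 (RInt g a 0)).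
 { apply is_RInt_ext with g. intros x Hx. rewrite Rmin_left, Rmax_right in Hx by lra.
   symmetry; apply Hfg; lra. apply (RInt_correct (V := R_CompleteNormedModule)), ex_RInt_cp; auto. }
 assert (E2 : is_RInt f 0 b (RInt g 0 b)).
 { apply is_RInt_ext with g. intros x Hx. rewrite Rmin_left, Rmax_right in Hx by lra.
   symmetry; apply Hfg; lra. apply (RInt_correct (V := R_CompleteNormedModule)), ex_RInt_cp; auto. }
 pose proof (is_RInt_Chasles _ _ _ _ _ _ E1 E2) as E.
 apply (is_RInt_unique (V := R_CompleteNormedModule)) in E. rewrite E.
 apply (RInt_Chasles (V := R_CompleteNormedModule)); apply ex_RInt_cp; auto. Qed.

Lemma is_RInt_poly (c0 c2 d : R) :
  is_RInt (fun x => c0 + c2 * x^2) (-d) d (2 * c0 * d + 2 * c2 * d^3 / 3).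
Proof.
 replace (2 * c0 * d + 2 * c2 * d^3 / 3) with
   (minus ((fun x => c0 * x + c2 * x^3 / 3) d) ((fun x => c0 * x + c2 * x^3 / 3) (-d)))
   by (unfold minus, plus, opp; simpl; field).
 apply (is_RInt_derive (V := R_CompleteNormedModule) (fun x => c0 * x + c2 * x^3 / 3)).
 - intros x _. auto_derive; auto. field.
 - intros x _. apply continuity_pt_filterlim.
   apply cp_plus. apply cp_const. apply cp_mult. apply cp_const. apply cp_pow2, cp_id.
Qed.

Lemma RInt_poly (c0 c2 d : R) :
  RInt (fun x => c0 + c2 * x^2) (-d) d = 2 * c0 * d + 2 * c2 * d^3 / 3.
Proof. apply is_RInt_unique, is_RInt_poly. Qed.
Lemma ex_RInt_poly (c0 c2 d : R) : ex_RInt (fun x => c0 + c2 * x^2) (-d) d.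
Proof. eexists; apply is_RInt_poly. Qed.

Lemma sgn_sq b : sgn b ^ 2 = 1.
Proof. destruct b; simpl; ring. Qed.
Lemma sgn_abs b : Rabs (sgn b) = 1.
Proof. destruct b; simpl; unfold Rabs; destruct Rcase_abs; lra. Qed.

Lemma gfun_eq N P z x : 0 < P -> gfun N P z x =
  ((P / INR N * sinc (P / INR N * x) * Cs N P z x)^2 + (P / INR N * sinc (P / INR N * x) * Ss N P z x)^2) * / (P * PI).
Proof. intros. unfold gfun. ring. Qed.

Lemma gfun_nonneg N P z x : 0 < P -> 0 <= gfun N P z x.
Proof. intros HP. rewrite gfun_eq by auto. pose proof PI_RGT_0.
 apply Rmult_le_pos. pose proof (pow2_ge_0 (P / INR N * sinc (P / INR N * x) * Cs N P z x)).
 pose proof (pow2_ge_0 (P / INR N * sinc (P / INR N * x) * Ss N P z x)). lra.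
 apply Rlt_le, Rinv_0_lt_compat. nra. Qed.

Lemma hx_bound N P x : (2 <= N)%nat -> 0 < P -> Rabs (P * x) <= PI / 2 ->
  0 < P / INR N /\ P / INR N <= P / 2 /\ (P / INR N * x)^2 <= (P * x)^2 / 4 /\ Rabs (P / INR N * x) <= PI.
Proof. intros HN HP Hx. assert (HNR : 2 <= INR N) by (apply (le_INR 2); lia).
 assert (h0 : 0 < P / INR N) by (apply Rdiv_lt_0_compat; lra).
 assert (h1 : P / INR N <= P / 2) by (apply Rmult_le_compat_l; [lra|apply Rinv_le_contravar; lra]).
 assert (E : P / INR N * x = (P * x) / INR N) by (field; lra).
 pose proof PI_RGT_0.
 split; [auto|split; [auto|split]].
 - rewrite E. unfold Rdiv. rewrite Rpow_mult_distr.
   assert ((/ INR N)^2 <= 1/4).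
   { replace (1/4) with ((/2)^2) by field. apply pow_incr. split.
     apply Rlt_le, Rinv_0_lt_compat; lra. apply Rinv_le_contravar; lra. }
   pose proof (pow2_ge_0 (P * x)). nra.
 - rewrite E. unfold Rdiv. rewrite Rabs_mult, Rabs_inv, (Rabs_pos_eq (INR N)) by lra.
   assert (/ INR N <= 1) by (rewrite <- Rinv_1; apply Rinv_le_contravar; lra).
   assert (0 < / INR N) by (apply Rinv_0_lt_compat; lra).
   pose proof (Rabs_pos (P * x)). nra.
Qed.

Lemma theta_x N P j x : 0 < P -> (1 <= N)%nat -> (j < N)%nat -> Rabs (P * x) <= PI / 2 ->
  Rabs (freq N P j * x) <= PI / 2.
Proof. intros HP HN Hj Hx. rewrite Rabs_mult. pose proof (freq_abs N P j HP HN Hj).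
 rewrite Rabs_mult, (Rabs_pos_eq P) in Hx by lra. pose proof (Rabs_pos x). nra. Qed.

Lemma PI2_sq : (PI / 2)^2 <= 64/25.
Proof. pose proof PI_ub. pose proof PI_RGT_0. nra. Qed.

Lemma const_upper N P z x : (2 <= N)%nat -> 0 < P -> Rabs (P * x) <= PI / 2 ->
  gfun N P z x <= P / PI.
Proof. intros HN HP Hx. destruct (hx_bound N P x HN HP Hx) as [h0 [h1 [h2 h3]]].
 assert (HNR : 2 <= INR N) by (apply (le_INR 2); lia). pose proof PI_RGT_0.
 pose proof (sinc_abs _ h3) as Hs.
 assert (Hs2 : sinc (P / INR N * x) ^2 <= 1).
 { rewrite <- pow2_abs. rewrite <- (pow1 2). apply pow_incr. split; [apply Rabs_pos|auto]. }
 assert (HCS : Cs N P z x ^2 + Ss N P z x ^2 <= INR N ^2).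
 { apply sq_sum_le. intros j. rewrite !Rpow_mult_distr, sgn_sq.
   pose proof (sin2_cos2 (freq N P j * x)). unfold Rsqr in *. simpl. lra. }
 unfold gfun. rewrite Rpow_mult_distr.
 assert (E : (P / INR N)^2 * INR N^2 = P^2) by (field; lra).
 pose proof (pow2_ge_0 (sinc (P / INR N * x))).
 pose proof (pow2_ge_0 (Cs N P z x)). pose proof (pow2_ge_0 (Ss N P z x)).
 assert (0 <= (P / INR N)^2) by apply pow2_ge_0.
 assert (Hinv : 0 < / (P * PI)) by (apply Rinv_0_lt_compat; nra).
 apply Rle_trans with ((P / INR N)^2 * 1 * / (P * PI) * INR N ^2).
 - apply Rmult_le_compat.
   + apply Rmult_le_pos; [apply Rmult_le_pos|]; lra.
   + lra.
   + apply Rmult_le_compat_r; [lra|]. apply Rmult_le_compat_l; lra.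
   + exact HCS.
 - right. field_simplify; [|lra|lra]. field. lra.
Qed.

Lemma cos_sum_lower N P x : (1 <= N)%nat -> 0 < P -> Rabs (P * x) <= PI / 2 ->
  INR N * (1 - (P * x)^2 / 6) <= rsum (fun j => cos (freq N P j * x)) N.
Proof. intros HN HP Hx.
 apply Rle_trans with (rsum (fun j => 1 + (- (x^2/2)) * (freq N P j)^2) N).
 - rewrite rsum_plus, rsum_const, rsum_scal.
   pose proof (freq_sq_sum N P HP HN).
   assert (0 <= x^2/2) by (pose proof (pow2_ge_0 x); lra).
   assert (x^2/2 * rsum (fun j => freq N P j ^ 2) N <= x^2/2 * (P^2 * INR N / 3))
     by (apply Rmult_le_compat_l; lra).
   replace (INR N * (1 - (P * x)^2 / 6)) with (INR N * 1 - x^2/2 * (P^2 * INR N / 3)) by field.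
   lra.
 - apply rsum_le_lt. intros j Hj. pose proof (theta_x N P j x HP HN Hj Hx).
   assert (- PI / 2 <= freq N P j * x <= PI / 2) by (apply Rabs_le_between in H; lra).
   pose proof (cos_lo (freq N P j * x) ltac:(lra) ltac:(lra)).
   replace (1 + - (x^2/2) * freq N P j ^ 2) with (1 - (freq N P j * x)^2/2) by field. lra.
Qed.

Lemma const_lower N P z x : (2 <= N)%nat -> 0 < P -> (forall j, (j < N)%nat -> z j = z O) ->
  Rabs (P * x) <= PI / 2 ->
  P / PI * (1 - 5/12 * (P * x)^2) <= gfun N P z x.
Proof. intros HN HP Hz Hx. destruct (hx_bound N P x HN HP Hx) as [h0 [h1 [h2 h3]]].
 assert (HNR : 2 <= INR N) by (apply (le_INR 2); lia). pose proof PI_RGT_0.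
 set (u := (P * x)^2) in *.
 assert (Hu : 0 <= u <= 64/25).
 { split. apply pow2_ge_0. unfold u. rewrite <- pow2_abs. eapply Rle_trans; [|apply PI2_sq].
   apply pow_incr. split; [apply Rabs_pos|auto]. }
 destruct (sinc_bounds _ h3) as [s1 s2].
 set (sc := sinc (P / INR N * x)) in *.
 assert (Hsc : 1 - u/24 <= sc) by lra.
 assert (HC : Cs N P z x = sgn (z O) * rsum (fun j => cos (freq N P j * x)) N).
 { unfold Cs. rewrite <- rsum_scal. apply rsum_ext_lt. intros j Hj. rewrite Hz; auto. }
 pose proof (cos_sum_lower N P x ltac:(lia) HP Hx) as HS.
 fold u in HS. set (Sg := rsum (fun j => cos (freq N P j * x)) N) in *.
 assert (HC2 : (INR N * (1 - u/6))^2 <= Cs N P z x ^2).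
 { rewrite HC, (Rpow_mult_distr (sgn (z O))), sgn_sq, Rmult_1_l. apply pow_incr. split; [|auto].
   apply Rmult_le_pos; lra. }
 assert (Hsc2 : (1 - u/24)^2 <= sc^2) by (apply pow_incr; lra).
 unfold gfun. fold sc.
 set (h := P / INR N) in *.
 assert (E : h^2 * INR N^2 = P^2) by (unfold h; field; lra).
 assert (Hinv : 0 < / (P * PI)) by (apply Rinv_0_lt_compat; nra).
 pose proof (pow2_ge_0 (Ss N P z x)).
 apply Rle_trans with (h^2 * (1 - u/24)^2 * / (P * PI) * (INR N * (1 - u/6))^2).
 - replace (h^2 * (1 - u/24)^2 * / (P * PI) * (INR N * (1 - u/6))^2)
     with ((h^2 * INR N^2) * / (P * PI) * ((1 - u/24)^2 * (1 - u/6)^2)) by ring.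
   rewrite E. replace (P ^ 2 * / (P * PI)) with (P / PI) by (field; lra).
   apply Rmult_le_compat_l. apply Rlt_le, Rdiv_lt_0_compat; lra.
   assert (0 <= 1 - u/12) by lra. assert (0 <= 1 - u/3) by lra.
   assert ((1 - u/12) <= (1 - u/24)^2) by nra.
   assert ((1 - u/3) <= (1 - u/6)^2) by nra.
   apply Rle_trans with ((1 - u/12) * (1 - u/3)). nra.
   apply Rmult_le_compat; lra.
 - rewrite (Rpow_mult_distr h sc). apply Rmult_le_compat.
   + apply Rmult_le_pos; [apply Rmult_le_pos|]; [apply pow2_ge_0|apply pow2_ge_0|lra].
   + apply pow2_ge_0.
   + apply Rmult_le_compat_r; [lra|]. apply Rmult_le_compat_l; [apply pow2_ge_0|auto].
   + lra.
Qed.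

Lemma bal_upper N P z x : (2 <= N)%nat -> 0 < P -> rsum (fun j => sgn (z j)) N = 0 ->
  Rabs (P * x) <= PI / 2 ->
  gfun N P z x <= 0 + P^3 / (2 * PI) * x^2.
Proof. intros HN HP Hz Hx. destruct (hx_bound N P x HN HP Hx) as [h0 [h1 [h2 h3]]].
 assert (HNR : 2 <= INR N) by (apply (le_INR 2); lia). pose proof PI_RGT_0.
 assert (Hu : 0 <= (P * x)^2 <= 64/25).
 { split. apply pow2_ge_0. rewrite <- pow2_abs. eapply Rle_trans; [|apply PI2_sq].
   apply pow_incr. split; [apply Rabs_pos|auto]. }
 destruct (sinc_bounds _ h3) as [s1 s2]. pose proof (sinc_abs _ h3) as s3.
 pose proof (freq_sq_sum N P HP ltac:(lia)) as Hsq.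
 rewrite gfun_eq by auto.
 set (h := P / INR N) in *. set (sc := sinc (h * x)) in *.
 assert (hN : h * INR N = P) by (unfold h; field; lra).
 set (w := h * sc).
 assert (Hw : Rabs w <= h).
 { unfold w. rewrite Rabs_mult, (Rabs_pos_eq h) by lra. pose proof (Rabs_pos sc). nra. }
 assert (Hwh : Rabs (w - h) <= h * ((h * x)^2 / 6)).
 { unfold w. replace (h * sc - h) with (h * (sc - 1)) by ring.
   rewrite Rabs_mult, (Rabs_pos_eq h) by lra. apply Rmult_le_compat_l; [lra|].
   rewrite Rabs_left1 by lra. unfold Rdiv. lra. }
 assert (HC : Rabs (w * Cs N P z x) <= 5/24 * P^3 * x^2).
 { assert (E : w * Cs N P z x = rsum (fun j => sgn (z j) * (w * cos (freq N P j * x) - h)) N).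
   { rewrite (rsum_ext_lt _ (fun j => w * (sgn (z j) * cos (freq N P j * x)) + (- h) * sgn (z j)))
       by (intros; ring).
     rewrite rsum_plus, !rsum_scal, Hz. unfold Cs. ring. }
   rewrite E. eapply Rle_trans; [apply rsum_abs|].
   apply Rle_trans with (rsum (fun j => (h * x^2 / 2) * (freq N P j)^2 + h * (h * x)^2 / 6) N).
   - apply rsum_le_lt. intros j Hj. rewrite Rabs_mult, sgn_abs, Rmult_1_l.
     pose proof (theta_x N P j x HP ltac:(lia) Hj Hx) as Hb.
     pose proof (cos_1 _ Hb) as Hc.
     replace (w * cos (freq N P j * x) - h) with (w * (cos (freq N P j * x) - 1) + (w - h)) by ring.
     eapply Rle_trans; [apply Rabs_triang|]. rewrite Rabs_mult.
     assert (Rabs w * Rabs (cos (freq N P j * x) - 1) <= h * ((freq N P j * x)^2 / 2)).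
     { apply Rmult_le_compat; auto; apply Rabs_pos. }
     replace (h * x ^ 2 / 2 * freq N P j ^ 2) with (h * ((freq N P j * x)^2 / 2)) by field.
     lra.
   - rewrite rsum_plus, rsum_scal, rsum_const.
     assert (A1 : h * x^2/2 * rsum (fun j => freq N P j ^ 2) N <= h * x^2/2 * (P^2 * INR N / 3)).
     { apply Rmult_le_compat_l; auto. pose proof (pow2_ge_0 x). apply Rmult_le_pos; [apply Rmult_le_pos|]; lra. }
     assert (A2 : h * x^2/2 * (P^2 * INR N / 3) = P^3 * x^2 / 6).
     { replace P with (h * INR N) at 2 by auto. rewrite <- hN. field. }
     assert (A3 : INR N * (h * (h * x)^2 / 6) <= P^3 * x^2 / 24).
     { replace (INR N * (h * (h * x)^2 / 6)) with ((h * INR N) * h^2 * x^2 / 6) by field.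
       rewrite hN. assert (h^2 <= P^2/4) by nra. pose proof (pow2_ge_0 x). 
       assert (P * h^2 * x^2 <= P * (P^2/4) * x^2).
       { apply Rmult_le_compat_r; auto. apply Rmult_le_compat_l; lra. }
       lra. }
     lra. }
 assert (HS : Rabs (w * Ss N P z x) <= 26/45 * P^2 * Rabs x).
 { unfold Ss. rewrite <- rsum_scal. eapply Rle_trans; [apply rsum_abs|].
   apply Rle_trans with (rsum (fun j => (h * Rabs x) * (3/10 * P + 5 / (6 * P) * (freq N P j)^2)) N).
   - apply rsum_le_lt. intros j Hj.
     pose proof (theta_x N P j x HP ltac:(lia) Hj Hx) as Hb.
     assert (Hsb : Rabs (sin (freq N P j * x)) <= Rabs (freq N P j * x)) by (apply abs_sin_le; lra).
     replace (w * (sgn (z j) * sin (freq N P j * x))) with (sgn (z j) * (w * sin (freq N P j * x))) by ring.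
     rewrite Rabs_mult, sgn_abs, Rmult_1_l, Rabs_mult.
     rewrite Rabs_mult in Hsb.
     assert (Ht : Rabs (freq N P j) <= 3/10 * P + 5 / (6 * P) * freq N P j ^2).
     { set (t := freq N P j). rewrite <- (pow2_abs t).
       assert (0 <= (Rabs t - 3/5 * P)^2) by apply pow2_ge_0.
       apply Rmult_le_reg_l with (6 * P); [lra|].
       replace (6 * P * (3/10 * P + 5 / (6 * P) * Rabs t ^ 2)) with (9/5 * P^2 + 5 * Rabs t ^2) by (field; lra).
       nra. }
     pose proof (Rabs_pos x). pose proof (Rabs_pos (freq N P j)).
     assert (Rabs w * Rabs (sin (freq N P j * x)) <= h * (Rabs (freq N P j) * Rabs x)).
     { apply Rmult_le_compat; auto; apply Rabs_pos. }
     assert (h * Rabs x * Rabs (freq N P j) <= h * Rabs x * (3 / 10 * P + 5 / (6 * P) * freq N P j ^ 2)).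
     { apply Rmult_le_compat_l; auto. apply Rmult_le_pos; lra. }
     lra.
   - rewrite rsum_scal, rsum_plus, rsum_const, rsum_scal.
     assert (A1 : 5 / (6 * P) * rsum (fun j => freq N P j ^ 2) N <= 5 / (6 * P) * (P^2 * INR N / 3)).
     { apply Rmult_le_compat_l; auto. apply Rlt_le, Rdiv_lt_0_compat; lra. }
     assert (A2 : h * Rabs x * (INR N * (3 / 10 * P) + 5 / (6 * P) * (P^2 * INR N / 3)) = 26/45 * P^2 * Rabs x).
     { replace (h * Rabs x * (INR N * (3 / 10 * P) + 5 / (6 * P) * (P^2 * INR N / 3)))
         with ((h * INR N) * Rabs x * (26/45 * P)) by (field; lra). rewrite hN. ring. }
     rewrite <- A2. apply Rmult_le_compat_l. pose proof (Rabs_pos x). apply Rmult_le_pos; lra.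
     lra. }
 set (C := w * Cs N P z x) in *. set (S := w * Ss N P z x) in *.
 assert (C2 : C^2 <= (5/24 * P^3 * x^2)^2).
 { rewrite <- (pow2_abs C). apply pow_incr. split; [apply Rabs_pos|auto]. }
 assert (S2 : S^2 <= (26/45 * P^2 * Rabs x)^2).
 { rewrite <- (pow2_abs S). apply pow_incr. split; [apply Rabs_pos|auto]. }
 replace ((26/45 * P^2 * Rabs x)^2) with ((26/45)^2 * P^4 * x^2) in S2
   by (rewrite <- (pow2_abs x); ring).
 set (u := (P * x)^2) in *.
 assert (Eu : (5/24 * P^3 * x^2)^2 = (5/24)^2 * P^4 * x^2 * u) by (unfold u; ring).
 rewrite Eu in C2.
 assert (P4 : 0 <= P^4 * x^2) by (pose proof (pow2_ge_0 x); pose proof (pow_le P 4 ltac:(lra)); nra).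
 assert (C2' : C^2 <= (5/24)^2 * P^4 * x^2 * (64/25)).
 { eapply Rle_trans; [exact C2|]. replace ((5/24)^2 * P^4 * x^2 * u) with (((5/24)^2) * (P^4 * x^2) * u) by ring.
   replace ((5/24)^2 * P^4 * x^2 * (64/25)) with (((5/24)^2) * (P^4 * x^2) * (64/25)) by ring.
   apply Rmult_le_compat_l; [nra|lra]. }
 assert (Sum : C^2 + S^2 <= P^4 * x^2 / 2) by lra.
 assert (Hinv : 0 < / (P * PI)) by (apply Rinv_0_lt_compat; nra).
 apply Rle_trans with (P^4 * x^2 / 2 * / (P * PI)).
 apply Rmult_le_compat_r; lra.
 right. field. lra.
Qed.

Lemma two_pow n : (1 <= n)%nat -> (2 <= 2 ^ n)%nat.
Proof. intros. replace n with (S (n - 1)) by lia. simpl.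
 pose proof (Nat.pow_le_mono_r 2 0 (n - 1) ltac:(lia) ltac:(lia)). simpl in H0. lia. Qed.

Lemma delta_pos P : 0 < P -> 0 < delta P.
Proof. intros. unfold delta. pose proof PI_RGT_0. apply Rdiv_lt_0_compat; lra. Qed.

Lemma in_window P x : 0 < P -> - delta P < x < delta P -> Rabs (P * x) <= PI / 2.
Proof. intros HP Hx. unfold delta in Hx. rewrite Rabs_mult, Rabs_pos_eq by lra.
 assert (Rabs x <= PI / (2 * P)) by (apply Rabs_le; lra).
 apply Rmult_le_reg_l with (/ P). apply Rinv_0_lt_compat; lra.
 replace (/ P * (P * Rabs x)) with (Rabs x) by (field; lra).
 replace (/ P * (PI / 2)) with (PI / (2 * P)) by (field; lra). lra. Qed.

Lemma detect_eq n P z : (1 <= n)%nat -> 0 < P ->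
  detect_prob n P z = RInt (gfun (2 ^ n) P z) (- delta P) (delta P).
Proof. intros Hn HP. unfold detect_prob. pose proof (delta_pos P HP).
 apply RInt_ext0. lra. apply gfun_cont.
 intros x Hx. apply phi_g; auto. pose proof (two_pow n Hn). lia. Qed.

Lemma delta_int c0 c2 P : 0 < P ->
  2 * c0 * delta P + 2 * c2 * delta P ^ 3 / 3 = c0 * PI / P + c2 * PI^3 / (12 * P^3).
Proof. intros. unfold delta. field. lra. Qed.

Lemma detect_const n P z : (1 <= n)%nat -> 0 < P -> is_constant n z ->
  16/25 <= detect_prob n P z <= 1.
Proof. intros Hn HP Hz. rewrite detect_eq by auto. pose proof (delta_pos P HP).
 pose proof (two_pow n Hn). pose proof PI_RGT_0. pose proof PI_ub.
 assert (Hex : ex_RInt (gfun (2 ^ n) P z) (- delta P) (delta P)) by (apply ex_RInt_cp, gfun_cont).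
 split.
 - eapply Rle_trans; [|apply RInt_le with (f := fun x => P / PI + (- (P / PI * (5/12) * P^2)) * x^2)].
   + rewrite RInt_poly, delta_int by auto.
     replace (P / PI * PI / P + - (P / PI * (5 / 12) * P ^ 2) * PI ^ 3 / (12 * P ^ 3))
       with (1 - 5 * PI^2 / 144) by (field; lra). nra.
   + lra.
   + apply ex_RInt_poly.
   + auto.
   + intros x Hx. pose proof (in_window P x HP Hx).
     eapply Rle_trans; [|apply const_lower; auto].
     right. ring.
 - eapply Rle_trans; [apply RInt_le with (g := fun x => P / PI + 0 * x^2)|].
   + lra.
   + auto.
   + apply ex_RInt_poly.
   + intros x Hx. pose proof (in_window P x HP Hx).
     eapply Rle_trans; [apply const_upper; auto|]. right. ring.
   + rewrite RInt_poly, delta_int by auto. right. field. lra.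
Qed.

Lemma detect_bal n P z : (1 <= n)%nat -> 0 < P -> is_balanced n z ->
  0 <= detect_prob n P z <= 43/100.
Proof. intros Hn HP Hz. rewrite detect_eq by auto. pose proof (delta_pos P HP).
 pose proof (two_pow n Hn). pose proof PI_RGT_0. pose proof PI_ub.
 assert (Hex : ex_RInt (gfun (2 ^ n) P z) (- delta P) (delta P)) by (apply ex_RInt_cp, gfun_cont).
 assert (Hs : rsum (fun j => sgn (z j)) (2 ^ n) = 0).
 { rewrite sgn_sum. unfold is_balanced in Hz. apply (f_equal INR) in Hz.
   rewrite mult_INR in Hz. simpl (INR 2) in Hz. lra. }
 split.
 - eapply Rle_trans; [|apply RInt_le with (f := fun x => 0 + 0 * x^2)].
   + rewrite RInt_poly. right. field.
   + lra.
   + apply ex_RInt_poly.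
   + auto.
   + intros x Hx. pose proof (gfun_nonneg (2 ^ n) P z x HP). lra.
 - eapply Rle_trans; [apply RInt_le with (g := fun x => 0 + P^3 / (2 * PI) * x^2)|].
   + lra.
   + auto.
   + apply ex_RInt_poly.
   + intros x Hx. pose proof (in_window P x HP Hx). apply bal_upper; auto.
   + rewrite RInt_poly, delta_int by auto.
     replace (0 * PI / P + P ^ 3 / (2 * PI) * PI ^ 3 / (12 * P ^ 3)) with (PI^2 / 24) by (field; lra).
     nra.
Qed.

Theorem theorem2 :
  exists C K : R, 0 < C /\ 0 < K /\
    forall (m n : nat) (P : R), (1 <= m)%nat -> 0 < P ->
      exists (k : nat) (D : list bool -> bool),
        INR k <= K * INR m /\
        forall z : nat -> bool,
          (is_constant n z ->
             error_prob (detect_prob n P z) k D true <= C * exp (- INR m)) /\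
          (is_balanced n z ->
             error_prob (detect_prob n P z) k D false <= C * exp (- INR m)).
Proof.
  exists 1, 52. split; [lra|]. split; [lra|].
  intros m n P Hm HP. destruct n as [|n'].
  - exists 0%nat, (fun _ => true). split.
    + simpl. pose proof (pos_INR m). lra.
    + intros z. split.
      * intros _. unfold error_prob. simpl. pose proof (exp_pos (- INR m)). lra.
      * intros Hb. exfalso. unfold is_balanced in Hb. simpl in Hb.
        destruct (z 0%nat); simpl in Hb; lia.
  - exists (52 * m)%nat, (Dth (28 * m)). split.
    + rewrite mult_INR. simpl (INR 52). right. ring.
    + intros z. rewrite Rmult_1_l.
      destruct (prob_final (detect_prob (S n') P z) m) as [A B]. split.
      * intros Hc. apply A. apply detect_const; auto. lia.
      * intros Hb. apply B. apply detect_bal; auto. lia.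
Qed.
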